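(* If $\Gamma_G$ is population monotonic, then $G$ has no induced subgraph isomorphic to the co-banner graph.
   Context: $G=(V,E;w)$ is a finite simple graph with edge weights $w:E\to\mathbb{R}$, $w_e>0$ for all $e\in E$. The matching game on $G$ is the cooperative game $\Gamma_G=(N,\gamma)$ with player set $N=V$ and, for $S\subseteq N$, $\gamma(S)$ equal to the maximum weight of a matching in the induced subgraph $G[S]$ (so $\gamma(\emptyset)=0$). A population monotonic allocation scheme (PMAS) is a family $(\boldsymbol{x}_S)_{\emptyset\neq S\subseteq N}$ with $\boldsymbol{x}_S=(x_{S,i})_{i\in S}\in\mathbb{R}^S$ such that (efficiency) $\sum_{i\in S}x_{S,i}=\gamma(S)$ for every nonempty $S\subseteq N$, and (monotonicity) $x_{S,i}\le x_{T,i}$ whenever $\emptyset\ne S\subseteq T\subseteq N$ and $i\in S$. $\Gamma_G$ is called population monotonic if it admits a PMAS. The co-banner graph is the graph on vertices $\{1,2,3,4,5\}$ with edge set exactly $\{12,23,34,35,45\}$ (a triangle $345$ with a pendant path $3$–$2$–$1$). *)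

(* Defs.v *)
From mathcomp Require Import all_boot all_order all_algebra.
Set Implicit Arguments. Unset Strict Implicit. Unset Printing Implicit Defensive.
Import Order.TTheory GRing.Theory Num.Theory.
Local Open Scope ring_scope.

(* A finite simple graph on the vertex type V is given by its edge set
   E : {set {set V}}, every edge being a 2-element subset of V.
   Edge weights are w : {set V} -> R (only values on E matter). *)

Definition simple_graph (V : finType) (E : {set {set V}}) : Prop :=
  forall f, f \in E -> #|f| = 2%N.

Definition matching_in (V : finType) (E : {set {set V}}) (S : {set V})
    (M : {set {set V}}) : bool :=
  [&& M \subset E,
      [forall f in M, f \subset S] &
      [forall f in M, forall g in M, (f != g) ==> [disjoint f & g]]].

Definition gamma (R : realDomainType) (V : finType) (E : {set {set V}})
    (w : {set V} -> R) (S : {set V}) : R :=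
  \big[Num.max/0]_(M : {set {set V}} | matching_in E S M) \sum_(f in M) w f.

(* Population monotonic allocation scheme: x S i is the payoff of i in S
   (only meaningful for i \in S). *)
Definition is_PMAS (R : realDomainType) (V : finType) (E : {set {set V}})
    (w : {set V} -> R) (x : {set V} -> V -> R) : Prop :=
  (forall S : {set V}, S != set0 -> \sum_(i in S) x S i = gamma E w S) /\
  (forall (S T : {set V}) (i : V), S != set0 -> S \subset T -> i \in S ->
      x S i <= x T i).

Definition population_monotonic (R : realDomainType) (V : finType)
    (E : {set {set V}}) (w : {set V} -> R) : Prop :=
  exists x : {set V} -> V -> R, is_PMAS E w x.

(* Co-banner graph on 'I_5, vertex k standing for vertex k+1 of the paper:
   edges 12, 23, 34, 35, 45  ~>  01, 12, 23, 24, 34. *)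
Definition cobanner_edge (i j : 'I_5) : bool :=
  let a := nat_of_ord i in let b := nat_of_ord j in
  [|| (a == 0) && (b == 1), (a == 1) && (b == 2), (a == 2) && (b == 3),
      (a == 2) && (b == 4) | (a == 3) && (b == 4)]%N.

Definition cobanner_adj (i j : 'I_5) : bool :=
  cobanner_edge i j || cobanner_edge j i.

Definition has_induced_cobanner (V : finType) (E : {set {set V}}) : Prop :=
  exists phi : 'I_5 -> V, injective phi /\
    forall i j : 'I_5, i != j -> (([set phi i; phi j] \in E) = cobanner_adj i j).

(* Main.v *)
Require Import Defs.
From mathcomp Require Import all_boot all_order all_algebra.
From mathcomp Require Import lra.
Import Order.TTheory GRing.Theory Num.Theory.
Local Open Scope ring_scope.
Set Implicit Arguments. Unset Strict Implicit. Unset Printing Implicit Defensive.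

Lemma gamma_ge0 (R : realDomainType) (V : finType) (E : {set {set V}})
  (w : {set V} -> R) (S : {set V}) : 0 <= gamma E w S.
Proof.
have H : matching_in E S set0.
  apply/and3P; split; first exact: sub0set.
  - by apply/forall_inP => f; rewrite inE.
  - by apply/forall_inP => f; rewrite inE.
apply: le_trans (le_bigmax_cond _ _ H); by rewrite big_set0.
Qed.

Lemma gamma_ge_edge (R : realDomainType) (V : finType) (E : {set {set V}})
  (w : {set V} -> R) (S : {set V}) f : f \in E -> f \subset S -> w f <= gamma E w S.
Proof.
move=> fE fS.
have H : matching_in E S [set f].
  apply/and3P; split; first by rewrite sub1set.
  - by apply/forall_inP => g; rewrite inE => /eqP->.
  - apply/forall_inP => g; rewrite inE => /eqP->.
    by apply/forall_inP => h; rewrite inE => /eqP->; rewrite eqxx.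
apply: le_trans (le_bigmax_cond _ _ H); by rewrite big_set1.
Qed.

Lemma gamma_le (R : realDomainType) (V : finType) (E : {set {set V}})
  (w : {set V} -> R) (S : {set V}) B : 0 <= B ->
  (forall M, matching_in E S M -> \sum_(f in M) w f <= B) -> gamma E w S <= B.
Proof. by move=> B0 H; apply: bigmax_le. Qed.

Lemma sum_match_le (R : realDomainType) (V : finType) (w : {set V} -> R)
  (M : {set {set V}}) B : 0 <= B ->
  (forall f, f \in M -> w f <= B) ->
  (forall f g, f \in M -> g \in M -> f != g -> w f + w g <= B) ->
  (forall f g h, f \in M -> g \in M -> h \in M -> f != g -> f != h -> g != h -> False) ->
  \sum_(f in M) w f <= B.
Proof.
move=> B0 H1 H2 H3.
case: (pickP (mem M)) => [f fM|H0]; last by rewrite big_pred0.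
rewrite (bigD1 f) //=.
case: (pickP [pred g | (g \in M) && (g != f)]) => [g /= /andP[gM gf]|H0].
  rewrite (bigD1 g) /=; last by rewrite gM gf.
  rewrite big_pred0 ?addr0; first by apply: H2; rewrite // eq_sym.
  move=> h /=; apply/negP => /andP[/andP[hM hf] hg].
  by apply: (H3 f g h) => //; rewrite eq_sym.
by rewrite big_pred0 ?addr0 ?H1.
Qed.

Lemma match_two (V : finType) (E : {set {set V}}) (S : {set V}) M f g :
  simple_graph E -> matching_in E S M -> f \in M -> g \in M -> f != g ->
  (4 <= #|S|)%N.
Proof.
move=> sE /and3P[ME /forall_inP MS /forall_inP Md] fM gM fg.
have := Md f fM => /forall_inP /(_ g gM); rewrite fg /= => dfg.
have cf : #|f| = 2%N by apply: sE; apply: (subsetP ME).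
have cg : #|g| = 2%N by apply: sE; apply: (subsetP ME).
have : #|f :|: g| = 4%N by rewrite cardsU (disjoint_setI0 dfg) cards0 cf cg.
move=> <-; apply: subset_leq_card; by rewrite subUset MS ?MS.
Qed.

Lemma match_three (V : finType) (E : {set {set V}}) (S : {set V}) M f g h :
  simple_graph E -> matching_in E S M -> f \in M -> g \in M -> h \in M ->
  f != g -> f != h -> g != h -> (6 <= #|S|)%N.
Proof.
move=> sE /and3P[ME /forall_inP MS /forall_inP Md] fM gM hM fg fh gh.
have := Md f fM => /forall_inP Mf.
have := Md g gM => /forall_inP Mg.
have dfg := Mf g gM; rewrite fg /= in dfg.
have dfh := Mf h hM; rewrite fh /= in dfh.
have dgh := Mg h hM; rewrite gh /= in dgh.
have cf : #|f| = 2%N by apply: sE; apply: (subsetP ME).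
have cg : #|g| = 2%N by apply: sE; apply: (subsetP ME).
have ch : #|h| = 2%N by apply: sE; apply: (subsetP ME).
have : #|f :|: g :|: h| = 6%N.
  by rewrite cardsU setIUl (disjoint_setI0 dfh) (disjoint_setI0 dgh) setU0 cardsU (disjoint_setI0 dfg) cards0 cf cg ch.
move=> <-; apply: subset_leq_card; by rewrite !subUset !MS.
Qed.

Definition SS (V : finType) (p : 'I_5 -> V) (l : seq 'I_5) : {set V} :=
  [set v in map p l].

Lemma SS_sum (R : realDomainType) (V : finType) (p : 'I_5 -> V) (F : V -> R) (l : seq 'I_5) :
  injective p -> uniq l -> \sum_(v in SS p l) F v = \sum_(i <- l) F (p i).
Proof.
move=> pinj ul.
rewrite (eq_bigl (mem (map p l))); last by move=> v; rewrite inE.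
by rewrite -big_uniq ?map_inj_uniq // big_map.
Qed.

Lemma SS_card (V : finType) (p : 'I_5 -> V) (l : seq 'I_5) : (#|SS p l| <= size l)%N.
Proof. by rewrite cardsE; apply: leq_trans (card_size _) _; rewrite size_map. Qed.

Lemma SS_mem (V : finType) (p : 'I_5 -> V) (l : seq 'I_5) i : i \in l -> p i \in SS p l.
Proof. by move=> il; rewrite inE map_f. Qed.

Lemma SS_sub (V : finType) (p : 'I_5 -> V) (l1 l2 : seq 'I_5) :
  {subset l1 <= l2} -> SS p l1 \subset SS p l2.
Proof.
move=> s; apply/subsetP => v; rewrite !inE => /mapP[i il ->].
by rewrite map_f // s.
Qed.

Lemma edge_idx (V : finType) (E : {set {set V}}) (p : 'I_5 -> V) (l : seq 'I_5) f :
  simple_graph E ->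
  (forall i j : 'I_5, i != j -> (([set p i; p j] \in E) = cobanner_adj i j)) ->
  f \in E -> f \subset SS p l ->
  exists i j, [/\ i \in l, j \in l, cobanner_adj i j & f = [set p i; p j]].
Proof.
move=> sE Hadj fE fS.
have /cards2P[u [v [uv fuv]]] : #|f| == 2%N by rewrite sE.
have : u \in SS p l by apply: (subsetP fS); rewrite fuv !inE eqxx.
rewrite inE => /mapP[i il ui].
have : v \in SS p l by apply: (subsetP fS); rewrite fuv !inE eqxx orbT.
rewrite inE => /mapP[j jl vj].
have ij : i != j by apply: contraNneq uv => ij; rewrite ui vj ij.
exists i, j; split => //; last by rewrite fuv ui vj.
by rewrite -Hadj // -ui -vj -fuv.
Qed.

Lemma ub4 (R : realDomainType) (V : finType) (E : {set {set V}})
  (w : {set V} -> R) (p : 'I_5 -> V) (l : seq 'I_5) B :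
  simple_graph E ->
  (forall i j : 'I_5, i != j -> (([set p i; p j] \in E) = cobanner_adj i j)) ->
  injective p -> (size l <= 4)%N -> 0 <= B ->
  (forall i j, i \in l -> j \in l -> cobanner_adj i j -> w [set p i; p j] <= B) ->
  (forall i j k m, i \in l -> j \in l -> k \in l -> m \in l ->
     cobanner_adj i j -> cobanner_adj k m ->
     i != k -> i != m -> j != k -> j != m ->
     w [set p i; p j] + w [set p k; p m] <= B) ->
  gamma E w (SS p l) <= B.
Proof.
move=> sE Hadj pinj sl B0 H1 H2.
apply: gamma_le => // M HM.
have HM' := HM; move/and3P: HM' => [ME /forall_inP MS /forall_inP Md].
have eidx f : f \in M -> exists i j, [/\ i \in l, j \in l, cobanner_adj i j & f = [set p i; p j]].
  by move=> fM; apply: (edge_idx (l := l) sE Hadj); [apply: (subsetP ME) | apply: MS].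
apply: sum_match_le => //.
- by move=> f /eidx[i [j [il jl aij ->]]]; apply: H1.
- move=> f g fM gM fg.
  have := Md f fM => /forall_inP /(_ g gM); rewrite fg /= => dfg.
  move: (eidx f fM) (eidx g gM) dfg => [i [j [il jl aij ->]]] [k [m [kl ml akm ->]]] dfg.
  have nin u : u \in [set p i; p j] -> u \in [set p k; p m] -> False.
    move=> u1 u2; move: dfg => /disjoint_setI0 /setP /(_ u).
    by rewrite inE u1 u2 inE.
  apply: H2 => //; apply/eqP => e; subst; [apply: (nin (p k))|apply: (nin (p m))|apply: (nin (p k))|apply: (nin (p m))]; rewrite !inE eqxx ?orbT //.
- move=> f g h fM gM hM fg fh gh.
  have := match_three sE HM fM gM hM fg fh gh.
  by move/leq_trans/(_ (leq_trans (SS_card p l) sl)).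
Qed.

Lemma ub3 (R : realDomainType) (V : finType) (E : {set {set V}})
  (w : {set V} -> R) (p : 'I_5 -> V) (l : seq 'I_5) B :
  simple_graph E ->
  (forall i j : 'I_5, i != j -> (([set p i; p j] \in E) = cobanner_adj i j)) ->
  injective p -> (size l <= 3)%N -> 0 <= B ->
  (forall i j, i \in l -> j \in l -> cobanner_adj i j -> w [set p i; p j] <= B) ->
  gamma E w (SS p l) <= B.
Proof.
move=> sE Hadj pinj sl B0 H1.
apply: gamma_le => // M HM.
have HM' := HM; move/and3P: HM' => [ME /forall_inP MS /forall_inP Md].
have eidx f : f \in M -> exists i j, [/\ i \in l, j \in l, cobanner_adj i j & f = [set p i; p j]].
  by move=> fM; apply: (edge_idx (l := l) sE Hadj); [apply: (subsetP ME) | apply: MS].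
apply: sum_match_le => //.
- by move=> f /eidx[i [j [il jl aij ->]]]; apply: H1.
- move=> f g fM gM fg; exfalso.
  have := match_two sE HM fM gM fg.
  by move/leq_trans/(_ (leq_trans (SS_card p l) sl)).
- move=> f g h fM gM hM fg fh gh.
  have := match_three sE HM fM gM hM fg fh gh.
  by move/leq_trans/(_ (leq_trans (SS_card p l) sl)).
Qed.

Definition o0 : 'I_5 := @Ordinal 5 0 isT.
Definition o1 : 'I_5 := @Ordinal 5 1 isT.
Definition o2 : 'I_5 := @Ordinal 5 2 isT.
Definition o3 : 'I_5 := @Ordinal 5 3 isT.
Definition o4 : 'I_5 := @Ordinal 5 4 isT.

Lemma set2C (T : finType) (u v : T) : [set u; v] = [set v; u].
Proof. exact: setUC. Qed.

Lemma max_cases (R : realDomainType) (u v : R) :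
  (Num.max u v = u /\ v <= u) \/ (Num.max u v = v /\ u <= v).
Proof.
case: (leP u v) => h; [right | left]; split => //; exact: ltW.
Qed.

Lemma arith (R : realFieldType) (a b c d e : R)
  (p01_0 p01_1 p12_1 p12_2 p23_2 p23_3 p24_2 p24_4 p34_3 p34_4 : R)
  (y2 y3 y4 z1 z2 z3 u1 u2 u4 v0 v1 v2 t1 t2 t3 t4 mT mZ mU mW mQ : R) :
  0 < a -> 0 < b -> 0 < c -> 0 < d -> 0 < e ->
  0 <= p01_0 -> 0 <= p12_1 -> 0 <= p23_2 -> 0 <= p24_2 -> 0 <= p34_3 ->
  0 <= p01_1 -> 0 <= p12_2 -> 0 <= p23_3 -> 0 <= p24_4 -> 0 <= p34_4 ->
  0 <= y4 -> 0 <= v0 ->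
  a <= p01_0 + p01_1 -> b <= p12_1 + p12_2 -> c <= p23_2 + p23_3 ->
  d <= p24_2 + p24_4 -> e <= p34_3 + p34_4 ->
  p23_2 <= y2 -> p23_3 <= y3 -> p24_2 <= y2 -> p24_4 <= y4 -> p34_3 <= y3 -> p34_4 <= y4 ->
  p12_1 <= z1 -> p12_2 <= z2 -> p23_3 <= z3 -> p23_2 <= z2 ->
  p12_1 <= u1 -> p12_2 <= u2 -> p24_2 <= u2 -> p24_4 <= u4 ->
  p01_0 <= v0 -> p01_1 <= v1 -> p12_1 <= v1 -> p12_2 <= v2 ->
  p12_1 <= t1 -> y2 <= t2 -> y3 <= t3 -> y4 <= t4 ->
  y2 + (y3 + y4) <= mT -> z1 + (z2 + z3) <= mZ -> u1 + (u2 + u4) <= mU ->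
  v0 + (v1 + v2) <= mW -> t1 + (t2 + (t3 + t4)) <= mQ ->
  (mT = c /\ d <= c /\ e <= c) \/ (mT = d /\ c <= d /\ e <= d) \/ (mT = e /\ c <= e /\ d <= e) ->
  (mZ = b /\ c <= b) \/ (mZ = c /\ b <= c) ->
  (mU = b /\ d <= b) \/ (mU = d /\ b <= d) ->
  (mW = a /\ b <= a) \/ (mW = b /\ a <= b) ->
  (mQ = b + e /\ c <= b + e /\ d <= b + e) \/ (mQ = c /\ b + e <= c /\ d <= c) \/ (mQ = d /\ b + e <= d /\ c <= d) ->
  False.
Proof.
move=> ha hb hc hd he n01_0 n12_1 n23_2 n24_2 n34_3 n01_1 n12_2 n23_3 n24_4 n34_4 ny4 nv0.
move=> l01 l12 l23 l24 l34 m1 m2 m3 m4 m5 m6 m7 m8 m9 m10 m11 m12 m13 m14 m15 m16 m17 m18 m19 m20 m21 m22.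
move=> sT sZ sU sW sQ hT hZ hU hW hQ.
case: hT => [[eT [dc ec]]|[[eT [cd ed]]|[eT [ce de]]]].
-
  have y4le : y4 <= 0 by clear -sT eT m1 m2 l23; lra.
  have h24 : d <= p24_2 by clear -y4le m4 l24; lra.
  have h34 : e <= p34_3 by clear -y4le m6 l34; lra.
  have y2ub : y2 <= c - e by clear -sT eT h34 m5 ny4; lra.
  have hZb : b + p23_3 <= mZ by clear -sZ m7 m8 m9 l12; lra.
  case: hZ => [[eZ cb]|[eZ bc]].
    by clear -hZb eZ l23 m1 y2ub he; lra.
  have hb2 : b <= c - e by clear -hZb eZ l23 m1 y2ub; lra.
  have hWa : a + p12_2 <= mW by clear -sW m15 m16 m18 l01; lra.
  case: hW => [[eW ba]|[eW ab]].
    have hUb : p12_1 + d <= mU by clear -sU m11 m13 h24 m14 n24_4; lra.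
    by case: hU => [[eU ?]|[eU ?]]; clear -hUb eU hWa eW l12 hd hb; lra.
  have ha1 : a <= p12_1 by clear -sW eW m15 m16 m17 m18 l12 l01 nv0; lra.
  have hQa : a + c <= mQ by clear -sQ m19 m20 m21 m22 m1 m2 l23 ny4 ha1; lra.
  by case: hQ => [[eQ ?]|[[eQ ?]|[eQ ?]]]; clear -hQa eQ hb2 ha dc hc; lra.
-
  have y3le : y3 <= 0 by clear -sT eT m3 m4 l24; lra.
  have h23 : c <= p23_2 by clear -y3le m2 l23; lra.
  have h34 : e <= p34_4 by clear -y3le m5 l34; lra.
  have y2ub : y2 <= d - e by clear -sT eT h34 m6 m2 n23_3; lra.
  have hUb : b + p24_4 <= mU by clear -sU m11 m12 m14 l12; lra.
  case: hU => [[eU db]|[eU bd]].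
    by clear -hUb eU l24 m3 y2ub he; lra.
  have hb2 : b <= d - e by clear -hUb eU l24 m3 y2ub; lra.
  have hWa : a + p12_2 <= mW by clear -sW m15 m16 m18 l01; lra.
  case: hW => [[eW ba]|[eW ab]].
    have hZb : p12_1 + c <= mZ by clear -sZ m7 h23 m10 m9 n23_3; lra.
    by case: hZ => [[eZ ?]|[eZ ?]]; clear -hZb eZ hWa eW l12 hc hb; lra.
  have ha1 : a <= p12_1 by clear -sW eW m15 m16 m17 m18 l12 l01 nv0; lra.
  have hQa : a + d <= mQ by clear -sQ m19 m20 m21 m22 m3 m4 l24 m2 n23_3 ha1; lra.
  by case: hQ => [[eQ ?]|[[eQ ?]|[eQ ?]]]; clear -hQa eQ hb2 ha cd hd; lra.
- have y2le : y2 <= 0 by clear -sT eT m5 m6 l34; lra.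
  have : b + c <= mZ by clear -y2le sZ m7 m8 m9 m1 l23 l12; lra.
  by case: hZ => [[-> ?]|[-> ?]]; clear -hb hc; lra.
Qed.

Lemma max3_cases (R : realDomainType) (u v t : R) :
  (Num.max u (Num.max v t) = u /\ v <= u /\ t <= u) \/
  (Num.max u (Num.max v t) = v /\ u <= v /\ t <= v) \/
  (Num.max u (Num.max v t) = t /\ u <= t /\ v <= t).
Proof.
case: (max_cases v t) => [[-> h]|[-> h]].
  case: (max_cases u v) => [[-> h']|[-> h']].
  - by left; split => //; split => //; apply: le_trans h h'.
  - by right; left.
case: (max_cases u t) => [[-> h']|[-> h']].
- by left; split => //; split => //; apply: le_trans h h'.
- by right; right.
Qed.

Theorem mainTheorem11 (R : realFieldType) (V : finType) (E : {set {set V}})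
    (w : {set V} -> R) :
  simple_graph E ->
  (forall f, f \in E -> 0 < w f) ->
  population_monotonic E w ->
  ~ has_induced_cobanner E.
Proof.
move=> sE wpos [x [Heff Hmon]] [p [pinj Hadj]].
have nonneg l k : k \in l -> 0 <= x (SS p l) (p k).
  move=> kl.
  have ne : SS p [:: k] != set0 by apply/set0Pn; exists (p k); apply: SS_mem; rewrite inE.
  apply: le_trans (Hmon _ _ _ ne _ _).
  - have := Heff _ ne; rewrite SS_sum // big_cons big_nil addr0 => ->.
    exact: gamma_ge0.
  - by apply: SS_sub => i; rewrite inE => /eqP->.
  - by apply: SS_mem; rewrite inE.
have mono l1 l2 k : k \in l1 -> {subset l1 <= l2} -> x (SS p l1) (p k) <= x (SS p l2) (p k).
  move=> kl s.
  have ne : SS p l1 != set0 by apply/set0Pn; exists (p k); apply: SS_mem.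
  by apply: Hmon => //; [apply: SS_sub | apply: SS_mem].
have eff l : uniq l -> l != [::] -> \sum_(i <- l) x (SS p l) (p i) = gamma E w (SS p l).
  move=> ul; case: l ul => // k l ul _.
  have ne : SS p (k :: l) != set0 by apply/set0Pn; exists (p k); apply: SS_mem; rewrite inE eqxx.
  by rewrite -Heff // SS_sum.
have inE2 i j : i != j -> ([set p i; p j] \in E) = cobanner_adj i j by apply: Hadj.
have pairlb i j : i != j -> cobanner_adj i j -> w [set p i; p j] <= gamma E w (SS p [:: i; j]).
  move=> ij aij; apply: gamma_ge_edge; first by rewrite Hadj.
  by apply/subsetP => v; rewrite !inE => /orP[]/eqP->; rewrite ?eqxx ?orbT.
have wp i j : i != j -> cobanner_adj i j -> 0 < w [set p i; p j].
  by move=> ij aij; apply: wpos; rewrite Hadj.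
have ha := wp o0 o1 isT isT.
have hb := wp o1 o2 isT isT.
have hc := wp o2 o3 isT isT.
have hd := wp o2 o4 isT isT.
have he := wp o3 o4 isT isT.
have a' : w [set p o1; p o0] = w [set p o0; p o1] by rewrite set2C.
have b' : w [set p o2; p o1] = w [set p o1; p o2] by rewrite set2C.
have c' : w [set p o3; p o2] = w [set p o2; p o3] by rewrite set2C.
have d' : w [set p o4; p o2] = w [set p o2; p o4] by rewrite set2C.
have e' : w [set p o4; p o3] = w [set p o3; p o4] by rewrite set2C.

have mono' l1 l2 k : k \in l1 -> all (mem l2) l1 -> x (SS p l1) (p k) <= x (SS p l2) (p k).
  by move=> kl h; apply: mono kl _; apply/allP.
have eP01 := eff [:: o0; o1] isT isT; rewrite !big_cons big_nil addr0 in eP01.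
have nP01o0 := nonneg [:: o0; o1] o0 isT.
have nP01o1 := nonneg [:: o0; o1] o1 isT.
have eP12 := eff [:: o1; o2] isT isT; rewrite !big_cons big_nil addr0 in eP12.
have nP12o1 := nonneg [:: o1; o2] o1 isT.
have nP12o2 := nonneg [:: o1; o2] o2 isT.
have eP23 := eff [:: o2; o3] isT isT; rewrite !big_cons big_nil addr0 in eP23.
have nP23o2 := nonneg [:: o2; o3] o2 isT.
have nP23o3 := nonneg [:: o2; o3] o3 isT.
have eP24 := eff [:: o2; o4] isT isT; rewrite !big_cons big_nil addr0 in eP24.
have nP24o2 := nonneg [:: o2; o4] o2 isT.
have nP24o4 := nonneg [:: o2; o4] o4 isT.
have eP34 := eff [:: o3; o4] isT isT; rewrite !big_cons big_nil addr0 in eP34.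
have nP34o3 := nonneg [:: o3; o4] o3 isT.
have nP34o4 := nonneg [:: o3; o4] o4 isT.
have eT := eff [:: o2; o3; o4] isT isT; rewrite !big_cons big_nil addr0 in eT.
have nTo2 := nonneg [:: o2; o3; o4] o2 isT.
have nTo3 := nonneg [:: o2; o3; o4] o3 isT.
have nTo4 := nonneg [:: o2; o3; o4] o4 isT.
have eZ := eff [:: o1; o2; o3] isT isT; rewrite !big_cons big_nil addr0 in eZ.
have nZo1 := nonneg [:: o1; o2; o3] o1 isT.
have nZo2 := nonneg [:: o1; o2; o3] o2 isT.
have nZo3 := nonneg [:: o1; o2; o3] o3 isT.
have eU := eff [:: o1; o2; o4] isT isT; rewrite !big_cons big_nil addr0 in eU.
have nUo1 := nonneg [:: o1; o2; o4] o1 isT.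
have nUo2 := nonneg [:: o1; o2; o4] o2 isT.
have nUo4 := nonneg [:: o1; o2; o4] o4 isT.
have eW := eff [:: o0; o1; o2] isT isT; rewrite !big_cons big_nil addr0 in eW.
have nWo0 := nonneg [:: o0; o1; o2] o0 isT.
have nWo1 := nonneg [:: o0; o1; o2] o1 isT.
have nWo2 := nonneg [:: o0; o1; o2] o2 isT.
have eQ := eff [:: o1; o2; o3; o4] isT isT; rewrite !big_cons big_nil addr0 in eQ.
have nQo1 := nonneg [:: o1; o2; o3; o4] o1 isT.
have nQo2 := nonneg [:: o1; o2; o3; o4] o2 isT.
have nQo3 := nonneg [:: o1; o2; o3; o4] o3 isT.
have nQo4 := nonneg [:: o1; o2; o3; o4] o4 isT.
have l01 := pairlb o0 o1 isT isT.
have l12 := pairlb o1 o2 isT isT.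
have l23 := pairlb o2 o3 isT isT.
have l24 := pairlb o2 o4 isT isT.
have l34 := pairlb o3 o4 isT isT.
have m0 := mono' [:: o2; o3] [:: o2; o3; o4] o2 isT isT.
have m1 := mono' [:: o2; o3] [:: o2; o3; o4] o3 isT isT.
have m2 := mono' [:: o2; o4] [:: o2; o3; o4] o2 isT isT.
have m3 := mono' [:: o2; o4] [:: o2; o3; o4] o4 isT isT.
have m4 := mono' [:: o3; o4] [:: o2; o3; o4] o3 isT isT.
have m5 := mono' [:: o3; o4] [:: o2; o3; o4] o4 isT isT.
have m6 := mono' [:: o1; o2] [:: o1; o2; o3] o1 isT isT.
have m7 := mono' [:: o1; o2] [:: o1; o2; o3] o2 isT isT.
have m8 := mono' [:: o2; o3] [:: o1; o2; o3] o3 isT isT.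
have m9 := mono' [:: o2; o3] [:: o1; o2; o3] o2 isT isT.
have m10 := mono' [:: o1; o2] [:: o1; o2; o4] o1 isT isT.
have m11 := mono' [:: o1; o2] [:: o1; o2; o4] o2 isT isT.
have m12 := mono' [:: o2; o4] [:: o1; o2; o4] o2 isT isT.
have m13 := mono' [:: o2; o4] [:: o1; o2; o4] o4 isT isT.
have m14 := mono' [:: o0; o1] [:: o0; o1; o2] o0 isT isT.
have m15 := mono' [:: o0; o1] [:: o0; o1; o2] o1 isT isT.
have m16 := mono' [:: o1; o2] [:: o0; o1; o2] o1 isT isT.
have m17 := mono' [:: o1; o2] [:: o0; o1; o2] o2 isT isT.
have m18 := mono' [:: o1; o2] [:: o1; o2; o3; o4] o1 isT isT.
have m19 := mono' [:: o2; o3; o4] [:: o1; o2; o3; o4] o2 isT isT.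
have m20 := mono' [:: o2; o3; o4] [:: o1; o2; o3; o4] o3 isT isT.
have m21 := mono' [:: o2; o3; o4] [:: o1; o2; o3; o4] o4 isT isT.
pose a := w [set p o0; p o1]. pose b := w [set p o1; p o2].
pose c := w [set p o2; p o3]. pose d := w [set p o2; p o4].
pose e := w [set p o3; p o4].
have gT : gamma E w (SS p [:: o2; o3; o4]) <= Num.max c (Num.max d e).
  apply: ub3 => //.
  - by apply: (le_trans (ltW hc)); rewrite !le_max lexx.
  - move=> i j; rewrite !inE => /or3P[]/eqP-> /or3P[]/eqP-> // _;
    by rewrite ?c' ?d' ?e' !le_max lexx ?orbT.
have gZ : gamma E w (SS p [:: o1; o2; o3]) <= Num.max b c.
  apply: ub3 => //.
  - by apply: (le_trans (ltW hc)); rewrite !le_max lexx ?orbT.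
  - move=> i j; rewrite !inE => /or3P[]/eqP-> /or3P[]/eqP-> // _;
    by rewrite ?b' ?c' !le_max lexx ?orbT.
have gU : gamma E w (SS p [:: o1; o2; o4]) <= Num.max b d.
  apply: ub3 => //.
  - by apply: (le_trans (ltW hd)); rewrite !le_max lexx ?orbT.
  - move=> i j; rewrite !inE => /or3P[]/eqP-> /or3P[]/eqP-> // _;
    by rewrite ?b' ?d' !le_max lexx ?orbT.
have gW : gamma E w (SS p [:: o0; o1; o2]) <= Num.max a b.
  apply: ub3 => //.
  - by apply: (le_trans (ltW ha)); rewrite !le_max lexx ?orbT.
  - move=> i j; rewrite !inE => /or3P[]/eqP-> /or3P[]/eqP-> // _;
    by rewrite ?a' ?b' !le_max lexx ?orbT.
have q1 : b + e <= Num.max (b + e) (Num.max c d) by rewrite le_max lexx.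
have q2 : c <= Num.max (b + e) (Num.max c d) by rewrite !le_max lexx ?orbT.
have q3 : d <= Num.max (b + e) (Num.max c d) by rewrite !le_max lexx ?orbT.
have q4 : b <= Num.max (b + e) (Num.max c d).
  by apply: le_trans q1; rewrite lerDl ltW.
have q5 : e <= Num.max (b + e) (Num.max c d).
  by apply: le_trans q1; rewrite lerDr ltW.
have gQ : gamma E w (SS p [:: o1; o2; o3; o4]) <= Num.max (b + e) (Num.max c d).
  apply: ub4 => //.
  - by apply: le_trans q4; apply: ltW.
  - move=> i j; rewrite !inE => /or4P[]/eqP-> /or4P[]/eqP-> // _;
    by rewrite ?b' ?c' ?d' ?e'.
  - move=> i j k m; rewrite !inE => /or4P[]/eqP-> /or4P[]/eqP-> /or4P[]/eqP-> /or4P[]/eqP-> // *;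
    rewrite ?b' ?c' ?d' ?e'; first [exact: q1 | rewrite addrC; exact: q1].
rewrite /a /b /c /d /e in gT gZ gU gW gQ.
rewrite -eT in gT; rewrite -eZ in gZ; rewrite -eU in gU; rewrite -eW in gW; rewrite -eQ in gQ.
rewrite -eP01 in l01; rewrite -eP12 in l12; rewrite -eP23 in l23; rewrite -eP24 in l24; rewrite -eP34 in l34.
exact: (arith ha hb hc hd he nP01o0 nP12o1 nP23o2 nP24o2 nP34o3 nP01o1 nP12o2 nP23o3 nP24o4 nP34o4 nTo4 nWo0
  l01 l12 l23 l24 l34 m0 m1 m2 m3 m4 m5 m6 m7 m8 m9 m10 m11 m12 m13 m14 m15 m16 m17 m18 m19 m20 m21
  gT gZ gU gW gQ (max3_cases _ _ _) (max_cases _ _) (max_cases _ _) (max_cases _ _) (max3_cases _ _ _)).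
Qed.
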